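(* Let $m\geq 2$ be an integer and $n'=2^{m-1}$. Then the number of subgroups of the direct product $\mathbb{Z}_2\times D_{2n'}$ is $$|L(\mathbb{Z}_2\times D_{2n'})|=5\sigma(n')+3\tau(n')-2n'-1.$$
   Context: $L(G)$ denotes the set of all subgroups of a group $G$. $D_{2n'}=\langle x,y\mid x^{n'}=y^2=e,\ y^{-1}xy=x^{-1}\rangle$ is the dihedral group of order $2n'$ (for $n'=2$ this is the Klein four-group). For a positive integer $k$, $\tau(k)$ is the number of positive divisors of $k$ and $\sigma(k)$ is their sum. *)

(* Defs.v *)
From mathcomp Require Import all_boot all_order all_algebra all_fingroup all_solvable.
Set Implicit Arguments. Unset Strict Implicit. Unset Printing Implicit Defensive.

Definition tau (k : nat) : nat := size (divisors k).
Definition sigma (k : nat) : nat := \sum_(d <- divisors k) d.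

(* The group Z_2 x D_{2^m}, as a finGroupType: 'Z_2 is the additive cyclic group of
   order 2, 'D_(2^m) is MathComp's dihedral group of order 2^m (extremal.v), i.e.
   D_{2n'} with n' = 2^(m-1), presented by <x,y | x^n', y^2, x^y = x^-1>. *)
Definition Z2xD (m : nat) : finGroupType := ('Z_2 * 'D_(2 ^ m))%type.

(* Main.v *)
Require Import Defs.
From mathcomp Require Import all_boot all_order all_algebra all_fingroup all_solvable.
From mathcomp Require Import zify.

Module Helpers.
Set Implicit Arguments. Unset Strict Implicit. Unset Printing Implicit Defensive.
Lemma arith (N S T P k : nat) : (N + 3 = 8 * P + 3 * k)%N -> (S + 1 = 2 * P)%N -> T = k.+1 ->
  (N%:Z = 5 * S%:Z + 3 * T%:Z - 2 * P%:Z - 1)%R.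
Proof. move=> *; lia. Qed.



Lemma geo k : (\sum_(j < k) 2 ^ (k + 2 - j) + 8 = 2 ^ (k + 3))%N.
Proof.
elim: k => [|k IH]; first by rewrite big_ord0.
rewrite big_ord_recl /= subn0.
have -> : (\sum_(i < k) 2 ^ (k.+1 + 2 - bump 0 i) = \sum_(j < k) 2 ^ (k + 2 - j))%N.
  by apply: eq_bigr => i _; rewrite /bump /= add1n addSn subSS.
by rewrite -addnA IH addSn (addnS k 2) -addnS !expnS addnn mul2n.
Qed.

Lemma geo1 k : (\sum_(j < k) 2 ^ j + 1 = 2 ^ k)%N.
Proof.
elim: k => [|k IH]; first by rewrite big_ord0.
by rewrite big_ord_recr /= addnAC IH expnS mul2n addnn.
Qed.

Lemma divexp a b : b <= a -> 2 ^ a %/ 2 ^ b = 2 ^ (a - b).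
Proof. by move=> ba; rewrite expnB. Qed.

Lemma final_sum k :
  let F1 := fun b => (1 + 2 ^ k.+1 %/ b)%N in
  (\sum_(j < k.+1) (F1 (2 ^ j) + (gcdn (2 * 2 ^ j) (2 ^ k) %/ 2 ^ j) * F1 (2 * 2 ^ j)) + 3
    = 8 * 2 ^ k + 3 * k)%N.
Proof.
move=> F1; rewrite big_ord_recr /=.
have -> : (\sum_(j < k) (F1 (2 ^ j) + gcdn (2 * 2 ^ j) (2 ^ k) %/ 2 ^ j * F1 (2 * 2 ^ j))
   = \sum_(j < k) (3 + 2 ^ (k + 2 - j)))%N.
  apply: eq_bigr => j _; have jk := ltn_ord j.
  have h1 : j <= k.+1 by lia.
  have h2 : j <= j.+1 by lia.
  have h3 : j.+1 <= k.+1 by lia.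
  rewrite -expnS /F1 (gcdn_idPl _) ?dvdn_exp2l // (divexp h1) (divexp h2) (divexp h3).
  have -> : (k.+1 - j = (k - j).+1)%N by lia.
  have -> : (k.+1 - j.+1 = (k - j))%N by lia.
  have -> : (j.+1 - j = 1)%N by lia.
  have -> : (k + 2 - j = (k - j).+2)%N by lia.
  rewrite !expnS expn0. lia.
rewrite (gcdn_idPr _) ?dvdn_mull // divnn expn_gt0 mul1n /F1 -expnS.
rewrite (divexp (leqnSn k)) (divexp (leqnn _)) subSn // !subnn expn0 expnS.
have := geo k; rewrite big_split /= sum_nat_const card_ord expnD expn0 /=.
lia.
Qed.

Lemma divisors2 k : perm_eq (divisors (2 ^ k)) [seq 2 ^ i | i <- iota 0 k.+1].
Proof.
apply: uniq_perm; first exact: divisors_uniq.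
  by rewrite map_inj_uniq ?iota_uniq //; apply: expnI.
move=> d; rewrite -dvdn_divisors ?expn_gt0 //; apply/idP/mapP.
  by case/dvdn_pfactor => // l lk ->; exists l; rewrite // mem_iota ltnS.
by case=> l; rewrite mem_iota ltnS => /andP[_ lk] ->; apply: dvdn_exp2l.
Qed.

Lemma sigma2 k : sigma (2 ^ k) + 1 = 2 ^ k.+1.
Proof.
rewrite /sigma (perm_big _ (divisors2 k)) big_map.
by rewrite -[iota 0 k.+1]/(index_iota 0 k.+1) big_mkord geo1.
Qed.

Lemma tau2 k : tau (2 ^ k) = k.+1.
Proof. by rewrite /tau (perm_size (divisors2 k)) size_map size_iota. Qed.
Import GroupScope.
Section Gen.
Variables (gT : finGroupType) (G Y : {group gT}).
Hypotheses (nYG : Y <| G) (iYG : #|G : Y| = 2).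

Let sYG : Y \subset G. Proof. by case/andP: nYG. Qed.

Lemma cosY s t : s \in G :\: Y -> t \in G :\: Y -> s * t^-1 \in Y.
Proof.
move=> sGY tGY; have := rcoset_index2 sYG iYG tGY => E.
by move: sGY; rewrite -E => /rcosetP[y Yy ->]; rewrite mulgK.
Qed.

Lemma sqY s : s \in G :\: Y -> s ^+ 2 \in Y.
Proof.
move=> sGY; have sVGY : s^-1 \in G :\: Y.
  by move: sGY; rewrite !inE !groupV.
by have := cosY sGY sVGY; rewrite invgK expgS expg1.
Qed.

Definition Tset (A : {set gT}) :=
  [set s in G :\: Y | (s \in 'N(A)) && (s ^+ 2 \in A)].
Definition Sset (A : {set gT}) :=
  [set H : {group gT} | [&& H \subset G, H :&: Y == A & ~~ (H \subset Y)]].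

Lemma HsE (A : {group gT}) s : A \subset Y -> s \notin Y -> s \in 'N(A) ->
  s ^+ 2 \in A -> A <*> <[s]> = A :|: A :* s.
Proof.
move=> sAY nsY nAs s2A; rewrite norm_joinEr ?cycle_subG //.
apply/eqP; rewrite eqEsubset; apply/andP; split.
  apply/subsetP => _ /mulsgP[a t Aa /cycleP[j ->] ->].
  have -> : j = (odd j + 2 * j./2)%N by rewrite mul2n odd_double_half.
  rewrite expgD expgM.
  case: (odd j) => /=; rewrite inE.
    rewrite -expgM -expgD addnC expgD expg1 mulgA expgM; apply/orP; right. by rewrite mem_rcoset mulgK groupM // groupX.
  by rewrite expg0 mul1g; apply/orP; left; rewrite groupM // groupX.
rewrite subUset; apply/andP; split.
  by apply: mulG_subl.
apply/subsetP => _ /rcosetP[a Aa ->]; apply: mem_mulg => //; exact: cycle_id.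
Qed.

Lemma rcoset_out (A : {group gT}) s : A \subset Y -> s \notin Y ->
  A :* s :&: Y = set0.
Proof.
move=> sAY nsY; apply/setP=> u; rewrite inE in_set0.
apply/negP => /andP[/rcosetP[a Aa ->] Yas]; case/negP: nsY.
by rewrite -(mulKg a s) groupM // groupV (subsetP sAY).
Qed.

Lemma Tset_props (A : {group gT}) s : A \subset Y -> s \in Tset A ->
  [/\ (A <*> <[s]>)%G \in Sset A, s \in (A <*> <[s]>)%G,
      (A <*> <[s]>)%G :\: Y = A :* s & #|(A <*> <[s]>)%G| = (2 * #|A|)%N].
Proof.
move=> sAY /setIdP[sGY /andP[nAs s2A]]; have /setDP[sG nsY] := sGY.
have HE := HsE sAY nsY nAs s2A.
have sH : s \in (A <*> <[s]>)%G by rewrite /= HE inE rcoset_refl orbT.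
have out := rcoset_out sAY nsY.
split => //.
- rewrite inE join_subG (subset_trans sAY sYG) cycle_subG sG /=.
  rewrite HE setIUl (setIidPl sAY) out setU0 eqxx /=.
  by apply/negP => /subsetP/(_ s); rewrite -HE => /(_ sH); apply/negP.
- rewrite /= HE setDUl.
  have -> : A :\: Y = set0 by apply/eqP; rewrite setD_eq0.
  by rewrite set0U; apply/setDidPl; rewrite -setI_eq0 out.
- rewrite /= HE cardsU card_rcoset.
  have -> : A :&: A :* s = set0.
    apply/setP=> u; rewrite inE in_set0; apply/negP=> /andP[Au Asu].
    by have := out; move/setP/(_ u); rewrite inE Asu (subsetP sAY) // in_set0.
  by rewrite cards0 subn0 addnn mul2n.
Qed.

Lemma Sset_char (A H : {group gT}) s : A \subset Y -> H \in Sset A ->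
  s \in H :\: Y -> s \in Tset A /\ H = (A <*> <[s]>)%G.
Proof.
move=> sAY; rewrite inE => /and3P[sHG /eqP HYA nHY] /setDP[sH nsY].
have sG : s \in G := subsetP sHG s sH.
have sGY : s \in G :\: Y by rewrite inE nsY sG.
have nAs : s \in 'N(A).
  rewrite -HYA -cycle_subG; apply: normsI; rewrite cycle_subG.
    by rewrite (subsetP (normG H)).
  by rewrite (subsetP (normal_norm nYG)).
have s2A : s ^+ 2 \in A by rewrite -HYA inE groupX // sqY.
split; first by rewrite inE sGY nAs s2A.
apply: group_inj; rewrite /= HsE //; apply/eqP; rewrite eqEsubset.
apply/andP; split.
  apply/subsetP => h Hh; rewrite inE; case: (boolP (h \in Y)) => Yh.
    by rewrite -HYA inE Hh Yh.
  have hGY : h \in G :\: Y by rewrite inE Yh (subsetP sHG).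
  apply/orP; right; rewrite mem_rcoset -HYA inE; apply/andP; split; [by rewrite groupM ?groupV | exact: cosY].
have sAH : A \subset H by rewrite -HYA subsetIl.
rewrite subUset sAH; apply/subsetP => _ /rcosetP[a Aa ->].
by rewrite groupM // (subsetP sAH).
Qed.

Lemma card_Sset (A : {group gT}) : A \subset Y ->
  (#|Sset A| * #|A| = #|Tset A|)%N.
Proof.
move=> sAY; rewrite -[#|Tset A|]sum1_card.
rewrite (partition_big (fun s => (A <*> <[s]>)%G) (mem (Sset A))) /=; last first.
  by move=> s sT; case: (Tset_props sAY sT).
rewrite -sum_nat_const; apply: eq_bigr => H HS; rewrite sum1_card.
have HS' := HS; rewrite inE in HS'; case/and3P: HS' => _ _ /subsetPn[s0 sH0 nsY0].
have s0HY : s0 \in H :\: Y by rewrite inE nsY0.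
have [s0T HE] := Sset_char sAY HS s0HY.
have [_ _ HYE _] := Tset_props sAY s0T.
rewrite -(card_rcoset A s0) -HYE -HE; apply: eq_card => s.
rewrite [s \in H :\: Y]inE -[in RHS]topredE /=.
apply/andP/andP => [[nsY sH]|[sT /eqP Hs]]; last first.
  have [_ sHs _ _] := Tset_props sAY sT.
  by split; [case/setIdP: sT => /setDP[] | rewrite -Hs].
have sHY : s \in H :\: Y by rewrite inE nsY.
by have [sT ->] := Sset_char sAY HS sHY; rewrite sT.
Qed.

Lemma sum_subgroups (F : nat -> nat) :
  (\sum_(H in subgroups G) F #|H| =
   \sum_(A in subgroups Y) (F #|A| + #|Sset A| * F (2 * #|A|)))%N.
Proof.
rewrite (partition_big (fun H : {group gT} => (H :&: Y)%G) (mem (subgroups Y))) /=;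
  last by move=> H _; rewrite inE subsetIr.
apply: eq_bigr => A; rewrite inE => sAY.
rewrite (bigD1 A) /=; last first.
  by rewrite inE (subset_trans sAY sYG) /=; apply/eqP/group_inj/setIidPl.
congr (_ + _); rewrite -sum_nat_const; symmetry; apply: eq_big => H.
  apply/esym; rewrite !inE -val_eqE /= -andbA; case: (H \subset G) => //=.
  case: (boolP (H :&: Y == A :> {set gT})) => [/eqP HYA|] //=.
  congr negb; apply/eqP/idP => [->|sHY] //.
  by apply: group_inj; rewrite /= -HYA; apply/esym/setIidPl.
move=> HS; have HS' := HS; rewrite inE in HS'.
case/and3P: HS' => _ _ /subsetPn[s0 sH0 nsY0].
have s0HY : s0 \in H :\: Y by rewrite inE nsY0.
have [s0T ->] := Sset_char sAY HS s0HY.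
by have [_ _ _ ->] := Tset_props sAY s0T.
Qed.
End Gen.
Section Cyc.
Variable gT : finGroupType.

Lemma mem_cyc (a c : gT) (A : {group gT}) : A \subset <[a]> -> c \in <[a]> ->
  (c \in A) = (#[c] %| #|A|).
Proof.
move=> sA ca; rewrite -cycle_subG -(cardSg_cyclic (cycle_cyclic a)) //.
by rewrite cycle_subG.
Qed.

Lemma cyc_count (a : gT) e : e %| #[a] ->
  #|[set c in <[a]> | #[c] %| e]| = e.
Proof.
move=> ea; have e0 : 0 < e by apply: dvdn_gt0 ea.
have [q aq] : exists q, #[a] = (q * e)%N by apply/dvdnP.
have q0 : 0 < q by move: (order_gt0 a); rewrite aq muln_gt0 => /andP[].
have oH : #|<[a ^+ q]>| = e.
  by rewrite -orderE orderXdiv aq ?dvdn_mulr // mulKn.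
rewrite -[RHS]oH; apply: eq_card => c; rewrite inE.
case: (boolP (c \in <[a]>)) => ca /=.
  by rewrite (@mem_cyc a) ?cycleX // oH.
by apply/esym/negP => /(subsetP (cycleX a q)); apply/negP.
Qed.

Lemma sq_count (a : gT) (A : {group gT}) : A \subset <[a]> ->
  #|[set c in <[a]> | c ^+ 2 \in A]| = gcdn (2 * #|A|) #[a].
Proof.
move=> sA; rewrite -(@cyc_count a (gcdn (2 * #|A|) #[a])) ?dvdn_gcdr //; apply: eq_card => c.
rewrite !inE; case: (boolP (c \in <[a]>)) => ca //=.
rewrite (@mem_cyc a) ?groupX // order_dvdn -expgM -order_dvdn dvdn_gcd.
by rewrite [in #[c] %| #[a]]orderE order_dvdG ?andbT.
Qed.

Lemma sum_cyc (a : gT) k (g : nat -> nat) : #[a] = (2 ^ k)%N ->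
  (\sum_(A in subgroups <[a]>) g #|A| = \sum_(j < k.+1) g (2 ^ j))%N.
Proof.
move=> oa.
rewrite (partition_big (fun A : {group gT} => (inord (logn 2 #|A|) : 'I_k.+1)) xpredT) //=.
apply: eq_bigr => j _.
have j2 : 2 ^ j %| #[a] by rewrite oa dvdn_exp2l // -ltnS.
have := cycle_sub_group j2 => E.
transitivity (\sum_(A in [set H : {group gT} | H \subset <[a]> & #|H| == 2 ^ j]) g (2 ^ j))%N.
  apply: eq_big => A.
    rewrite !inE; case: (boolP (A \subset <[a]>)) => sA //=.
    have : #|A| %| 2 ^ k by rewrite -oa [#[a]]orderE cardSg.
    case/dvdn_pfactor => // l lk ->.
    by rewrite pfactorK // -val_eqE /= inordK ?ltnS // eqn_exp2l.
  move=> /andP[]; rewrite inE => sA /eqP <-.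
  have : #|A| %| 2 ^ k by rewrite -oa [#[a]]orderE cardSg.
  by case/dvdn_pfactor => // l lk ->; rewrite pfactorK // inordK ?ltnS.
by rewrite E big_set1.
Qed.
End Cyc.
Lemma Dfacts m : 1 < m -> exists x : 'D_(2 ^ m),
  [/\ #[x] = (2 ^ m.-1)%N, #|[set: 'D_(2 ^ m)]| = (2 ^ m)%N,
      (forall t : 'D_(2 ^ m), t \notin <[x]> -> t ^+ 2 = 1) &
      (forall z t : 'D_(2 ^ m), z \in <[x]> -> t \notin <[x]> -> z ^ t = z^-1)].
Proof.
move=> m1.
have isoD : [set: 'D_(2 ^ m)]%G \isog 'D_(2 ^ m) by exact: isog_refl.
have [[x y] genG [oy xy]] := generators_2dihedral m1 isoD.
have [[_ ordt inv] _ _ _ _] := dihedral2_structure m1 genG isoD.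
case: (genG) => cG _ ox _.
exists x; split => // [t nt|z t zx nt].
  have ot : #[t] = 2 by rewrite ordt // inE nt inE.
  by move: (expg_order t); rewrite ot.
by apply: inv; rewrite // inE nt inE.
Qed.
Lemma Z2sq (a : 'Z_2) : a * a = 1.
Proof. by case: a => [[|[|]]] //= ?; apply/val_inj. Qed.
Lemma Z2C (a b : 'Z_2) : a * b = b * a.
Proof. by case: a => [[|[|]]] //= ?; case: b => [[|[|]]] //= ?; apply/val_inj. Qed.
Lemma Z2conj (a b : 'Z_2) : a ^ b = a^-1.
Proof. by case: a => [[|[|]]] //= ?; case: b => [[|[|]]] //= ?; apply/val_inj. Qed.

Section Pair.
Variables gT1 gT2 : finGroupType.
Lemma pairM (u v : gT1 * gT2) : u * v = (u.1 * v.1, u.2 * v.2).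
Proof. by []. Qed.
Lemma pairV (u : gT1 * gT2) : u^-1 = (u.1^-1, u.2^-1).
Proof. by []. Qed.
Lemma pairJ (u v : gT1 * gT2) : u ^ v = (u.1 ^ v.1, u.2 ^ v.2).
Proof. by []. Qed.
Lemma pairX (u : gT1 * gT2) n : u ^+ n = (u.1 ^+ n, u.2 ^+ n).
Proof. by elim: n => [|n IH] //; rewrite !expgS IH. Qed.
End Pair.

Lemma count_main k : 
  (#|subgroups [set: Z2xD k.+2]| + 3 = 8 * 2 ^ k.+1 + 3 * k.+1)%N.
Proof.
have m1 : 1 < k.+2 by [].
have [x [ox cD sq inv]] := Dfacts m1.
rewrite /= in ox.
pose T := Z2xD k.+2.
pose Y1 := (setX [set: 'Z_2] <[x]>)%G.
pose c0 : T := (1, x).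
pose z : T := (Zp1, 1).
have cT : #|[set: T]| = (2 * 2 ^ k.+2)%N.
  by rewrite cardsT card_prod card_ord -[X in (_ * X)%N]cardsT cD.
have cY1 : #|Y1| = (2 ^ k.+2)%N.
  by rewrite cardsX cardsT card_ord -orderE ox (expnS 2 k.+1).
have iY1 : #|[set: T] : Y1| = 2.
  by rewrite -divgS ?subsetT // cT cY1 mulnK ?expn_gt0.
have nY1 : Y1 <| [set: T]%G by apply: index2_normal; rewrite ?subsetT.
have TE : forall A : {group T}, A \subset Y1 ->
    Tset [set: T]%G Y1 A = [set: T] :\: Y1.
  move=> A sA; apply/setP => s; rewrite [in LHS]inE.
  case: (boolP (s \in [set: T] :\: Y1)) => //= sGY.
  have s2 : s.2 \notin <[x]>.
    by move: sGY; rewrite !inE andbT => /negP; rewrite andTb => /negP.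
  apply/andP; split.
    rewrite inE; apply/subsetP => u; rewrite mem_conjg => Au.
    rewrite -(conjgKV s u); move: Au; set b := u ^ s^-1 => Ab.
    have := subsetP sA b Ab; rewrite inE => /andP[_ b2].
    by rewrite pairJ Z2conj inv // -pairV groupV.
  by rewrite pairX sq // expgS expg1 Z2sq group1.
have lvl1 : #|subgroups [set: T]| =
    (\sum_(A in subgroups Y1) (1 + 2 ^ k.+2 %/ #|A|))%N.
  rewrite -sum1_card (sum_subgroups nY1 iY1 (fun _ => 1%N)).
  apply: eq_bigr => A; rewrite inE => sA; rewrite muln1; congr (_ + _)%N.
  have tc : #|Tset [set: T]%G Y1 A| = (2 ^ k.+2)%N.
    rewrite TE // cardsD (setIidPr (subsetT _)) cT cY1.
    by rewrite mul2n -addnn addnK.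
  transitivity (#|Tset [set: T]%G Y1 A| %/ #|A|)%N; last by congr (_ %/ _)%N.
  by rewrite -(card_Sset nY1 iY1 sA) mulnK ?cardG_gt0.
have CE : <[c0]> = setX 1 <[x]>.
  by rewrite -morphim_pair1g morphim_cycle ?inE.
have cC : #|<[c0]>| = (2 ^ k.+1)%N by rewrite CE cardsX cards1 mul1n -orderE ox.
have oc0 : #[c0] = (2 ^ k.+1)%N by rewrite orderE.
have sCY : <[c0]> \subset Y1 by rewrite CE setXS ?subsetT.
have iCY : #|Y1 : <[c0]>| = 2.
  by rewrite -divgS // cY1 cC (expnS 2 k.+1) mulnK ?expn_gt0.
have abY1 : abelian Y1.
  apply/centsP => u Yu v Yv; rewrite /commute !pairM Z2C; congr pair.
  move: Yu Yv; rewrite !inE => /andP[_ u2] /andP[_ v2].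
  exact: (centsP (cycle_abelian x)).
have nCY : <[c0]>%G <| Y1 by rewrite -sub_abelian_normal.
have zY : z \in Y1 :\: <[c0]> by rewrite CE !inE /= group1.
have zc : forall u : T, commute u z.
  by move=> u; rewrite /commute !pairM Z2C mulg1 mul1g.
have z2 : (z^-1) ^+ 2 = 1 by rewrite expgS expg1 pairM Z2sq /= invg1 mulg1.
have T2E : forall A : {group T}, A \subset <[c0]> ->
    Tset Y1 <[c0]>%G A = [set c in <[c0]> | c ^+ 2 \in A] :* z.
  move=> A sA; apply/setP => s; rewrite mem_rcoset [in LHS]inE [in RHS]inE.
  have E1 : (s \in Y1 :\: <[c0]>) = (s * z^-1 \in <[c0]>).
    by rewrite -(rcoset_index2 sCY iCY zY) mem_rcoset.
  have E2 : (s * z^-1) ^+ 2 = s ^+ 2.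
    by rewrite expgMn ?z2 ?mulg1 //; apply: commuteV.
  rewrite E1 E2; case: (boolP (s * z^-1 \in <[c0]>)) => //= h.
  have sY : s \in Y1 by move: h; rewrite -E1 => /setDP[].
  by rewrite (subsetP (sub_abelian_norm abY1 (subset_trans sA sCY))).
pose F1 := fun b => (1 + 2 ^ k.+2 %/ b)%N.
have lvl2 : (\sum_(A in subgroups Y1) F1 #|A| =
   \sum_(A in subgroups <[c0]>)
      (F1 #|A| + (gcdn (2 * #|A|) (2 ^ k.+1) %/ #|A|) * F1 (2 * #|A|)))%N.
  rewrite (sum_subgroups nCY iCY F1); apply: eq_bigr => A; rewrite inE => sA.
  congr (_ + _ * _)%N.
  transitivity (#|Tset Y1 <[c0]>%G A| %/ #|A|)%N.
    by rewrite -(card_Sset nCY iCY sA) mulnK ?cardG_gt0.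
  by rewrite T2E // card_rcoset sq_count // oc0.
rewrite lvl1 lvl2 (sum_cyc (fun b => F1 b + (gcdn (2 * b) (2 ^ k.+1) %/ b) * F1 (2 * b))%N oc0).
exact: (final_sum k.+1).
Qed.


End Helpers.
Import Helpers.

Theorem lemma2p3 (m : nat) : 2 <= m ->
  let n' := 2 ^ m.-1 in
  (#|subgroups [set: Z2xD m]|%:Z =
     5 * (sigma n')%:Z + 3 * (tau n')%:Z - 2 * n'%:Z - 1)%R.
Proof.
case: m => [|[|k]] // _ n'.
apply: (arith (k := k.+1)); first exact: count_main.
  by rewrite /n' /= sigma2 expnS.
by rewrite /n' tau2.
Qed.
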